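(* (a) The following are equivalent: $j(0)=0$; $F(0)=0$; $0\in X_+$; the system $w'(t)=q(v(t))w(t)$, $v'(t)=j(w_t,v_t)-\mu v(t)$, $(w,v)_0=(\varphi,\psi)$ has a zero solution. In either case $X_+\neq\emptyset$. If $j|_{U_+}$ is $C$-continuous at zero, then $F|_{U_+}$ is $C$-continuous at zero. Hence, if $j(0)=0$ and $j|_{U_+}$ is $C$-continuous at zero, then: for $\phi\in X_+$, if $x^\phi_t\to0$ in $C$ then $x^\phi_t\to0$ in $C^1$; if zero is globally attractive in $C$ it is so in $C^1$; for $E\subset X_+$, if zero is stable on $E$ in $C$ then also in $C^1$; and if zero is globally asymptotically stable in $C$ then also in $C^1$. If $j(0)=0$ and $$\forall\,\varepsilon>0\;\exists\,\delta>0\ \text{such that}\ j(\varphi,\psi)\le\varepsilon\ \ \forall\,(\varphi,\psi)\in U_+\ \text{with}\ \|\varphi\|_0\le\delta ,$$ then also: (b) Let $E\subset X_+$ with $0\in E$, and suppose $\|w^{(\varphi,\psi)}_t\|_0\le\|\varphi\|_0$ for all $(\varphi,\psi)\in E$, $t\ge0$. Then zero is stable on $E$ in $C$ and in $C^1$. (c) Let $\phi\in X_+$ and suppose that for $(w,v)=(w,v)^\phi$ one has $w(t)\to0$ as $t\to\infty$. Then $(w,v)_t\to0$ in $C$ and in $C^1$. In particular, if $w\to0$ for all initial data in $X_+$, then zero is globally attractive in both norms.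
   Context: Let $h>0$, $R_-<0$, $I=(R_-,\infty)$, $q:I\to\mathbb{R}$, $\mu>0$, $U=C^1([-h,0],\mathbb{R})\times C^1([-h,0],I)$, $j:U\to\mathbb{R}$, $U_+=C^1([-h,0],\mathbb{R}_+^2)$, $\|\cdot\|_0$ the sup-norm, $\|\phi\|_1=\|\phi\|_0+\|\phi'\|_0$; $x_t(s)=x(t+s)$. Define $F(\varphi,\psi)=(q(\psi(0))\varphi(0),\,j(\varphi,\psi)-\mu\psi(0))$ and $X_+=\{\phi\in C^1([-h,0],\mathbb{R}_+^2):\phi'(0)=F(\phi)\}$. Assume: $j$ is $C^1$ on $U$ with each derivative extending to a linear map on $C([-h,0],\mathbb{R}^2)$ depending continuously on $(\phi,\chi)$; for every bounded $B\subset U_+$ there is $L_B$ with $|j(\phi)-j(\chi)|\le L_B\|\phi-\chi\|_0$ on $B$; $j\ge0$ on $U_+$; $j(B_1\times B_2)$ is bounded whenever $B_1\times B_2\subset U_+$ with $B_1$ bounded; $q$ is bounded and $C^1$. Solutions from $X_+$ exist globally, stay in $X_+$ and define a continuous semiflow. Zero is stable on $E$ if for every $\varepsilon>0$ there is $\delta>0$ with $\|x^\phi_t\|<\varepsilon$ for all $t\ge0$ whenever $\phi\in E$, $\|\phi\|<\delta$. *)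

(* Defs.v *)
From Stdlib Require Import Reals ClassicalEpsilon.
From Coquelicot Require Import Coquelicot.
Open Scope R_scope.

(* A pair of real functions (w, v).  Used both for history segments
   (only the values on [-h,0] matter) and for solutions x = (w,v)
   defined on [-h, oo). *)
Definition seg : Type := ((R -> R) * (R -> R))%type.

Definition Iv (h s : R) : Prop := -h <= s <= 0.

Definition deriv_within (D : R -> Prop) (f : R -> R) (s l : R) : Prop :=
  filterlim (fun y => (f y - f s) / (y - s))
    (within (fun y => D y /\ y <> s) (locally s)) (locally l).

Definition C1on (h : R) (f : R -> R) : Prop :=
  exists f' : R -> R,
    (forall s, Iv h s -> deriv_within (Iv h) f s (f' s)) /\
    (forall s, Iv h s -> filterlim f' (within (Iv h) (locally s)) (locally (f' s))).

(* the derivative on [-h,0] of a C^1 function (unique, since the filter is proper) *)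
Definition dseg (h : R) (f : R -> R) (s : R) : R :=
  epsilon (inhabits 0) (fun l => deriv_within (Iv h) f s l).

Definition sup0 (h : R) (f : R -> R) : R :=
  real (Lub_Rbar (fun y => exists s, Iv h s /\ y = Rabs (f s))).

Definition norm0 (h : R) (p : seg) : R := Rmax (sup0 h (fst p)) (sup0 h (snd p)).

Definition norm1 (h : R) (p : seg) : R :=
  norm0 h p + Rmax (sup0 h (dseg h (fst p))) (sup0 h (dseg h (snd p))).

Definition segsub (p r : seg) : seg :=
  (fun s => fst p s - fst r s, fun s => snd p s - snd r s).

Definition zseg : seg := (fun _ => 0, fun _ => 0).

Definition shift (x : seg) (t : R) : seg :=
  (fun s => fst x (t + s), fun s => snd x (t + s)).

Definition inU (h Rm : R) (p : seg) : Prop :=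
  C1on h (fst p) /\ C1on h (snd p) /\ (forall s, Iv h s -> Rm < snd p s).

Definition inUp (h : R) (p : seg) : Prop :=
  C1on h (fst p) /\ C1on h (snd p) /\
  (forall s, Iv h s -> 0 <= fst p s /\ 0 <= snd p s).

Definition Ff (q : R -> R) (j : seg -> R) (mu : R) (p : seg) : R * R :=
  (q (snd p 0) * fst p 0, j p - mu * snd p 0).

Definition inXp (h : R) (q : R -> R) (j : seg -> R) (mu : R) (p : seg) : Prop :=
  inUp h p /\
  deriv_within (Iv h) (fst p) 0 (fst (Ff q j mu p)) /\
  deriv_within (Iv h) (snd p) 0 (snd (Ff q j mu p)).

Definition is_solution (h : R) (q : R -> R) (j : seg -> R) (mu : R) (x phi : seg) : Prop :=
  (forall s, Iv h s -> fst x s = fst phi s /\ snd x s = snd phi s) /\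
  (forall t, 0 <= t ->
     deriv_within (fun u => 0 <= u) (fst x) t (q (snd x t) * fst x t) /\
     deriv_within (fun u => 0 <= u) (snd x) t (j (shift x t) - mu * snd x t)).

Definition norm2 (a : R * R) : R := Rmax (Rabs (fst a)) (Rabs (snd a)).

Definition Ccont0_j (h : R) (j : seg -> R) : Prop :=
  forall eps, 0 < eps -> exists del, 0 < del /\
    forall p, inUp h p -> norm0 h p < del -> Rabs (j p - j zseg) < eps.

Definition Ccont0_F (h : R) (G : seg -> R * R) : Prop :=
  forall eps, 0 < eps -> exists del, 0 < del /\
    forall p, inUp h p -> norm0 h p < del ->
      norm2 (fst (G p) - fst (G zseg), snd (G p) - snd (G zseg)) < eps.

Definition conv0 (N : seg -> R) (x : seg) : Prop :=
  is_lim (fun t => N (shift x t)) p_infty 0.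

Definition stable_on (N : seg -> R) (sol : seg -> seg) (E : seg -> Prop) : Prop :=
  forall eps, 0 < eps -> exists del, 0 < del /\
    forall phi, E phi -> N phi < del -> forall t, 0 <= t -> N (shift (sol phi) t) < eps.

Definition glob_attr (N : seg -> R) (sol : seg -> seg) (X : seg -> Prop) : Prop :=
  forall phi, X phi -> conv0 N (sol phi).

Definition GAS (N : seg -> R) (sol : seg -> seg) (X : seg -> Prop) : Prop :=
  stable_on N sol X /\ glob_attr N sol X.

(* Main.v *)
Require Import Defs.
From Stdlib Require Import Reals ClassicalEpsilon Lra Classical.
From Coquelicot Require Import Coquelicot.
Open Scope R_scope.


Lemma ballR (x e y : R) : ball x e y <-> Rabs (y - x) < e.
Proof. reflexivity. Qed.

Lemma dw_eps D f s l : deriv_within D f s l <->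
  forall eps, 0 < eps -> exists del, 0 < del /\ forall y, D y -> y <> s ->
     Rabs (y - s) < del -> Rabs ((f y - f s)/(y - s) - l) < eps.
Proof.
  unfold deriv_within; rewrite filterlim_locally; split.
  - intros H eps He. destruct (H (mkposreal eps He)) as [d Hd].
    exists d; split; [apply cond_pos|]. intros y Dy ny Hy.
    apply (Hd y); [exact Hy| split; auto].
  - intros H eps. destruct (H eps (cond_pos eps)) as [d [Hd0 Hd]].
    exists (mkposreal d Hd0). intros y Hy [Dy ny]. apply (Hd y Dy ny Hy).
Qed.

Lemma cw_eps D f s l : filterlim f (within D (locally s)) (locally l) <->
  forall eps, 0 < eps -> exists del, 0 < del /\ forall y, D y ->
     Rabs (y - s) < del -> Rabs (f y - l) < eps.
Proof.
  rewrite filterlim_locally; split.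
  - intros H eps He. destruct (H (mkposreal eps He)) as [d Hd].
    exists d; split; [apply cond_pos|]. intros y Dy Hy.
    apply (Hd y); [exact Hy| auto].
  - intros H eps. destruct (H eps (cond_pos eps)) as [d [Hd0 Hd]].
    exists (mkposreal d Hd0). intros y Hy Dy. apply (Hd y Dy Hy).
Qed.

Lemma lim_eps (f : R -> R) : is_lim f p_infty 0 <->
  forall eps, 0 < eps -> exists T, forall t, T < t -> Rabs (f t) < eps.
Proof.
  change (filterlim f (Rbar_locally' p_infty) (locally 0) <->
    forall eps, 0 < eps -> exists T, forall t, T < t -> Rabs (f t) < eps).
  rewrite filterlim_locally; split.
  - intros H eps He. destruct (H (mkposreal eps He)) as [T HT].
    exists T. intros t Ht. generalize (HT t Ht). rewrite ballR. simpl.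
    now rewrite Rminus_0_r.
  - intros H eps. destruct (H eps (cond_pos eps)) as [T HT].
    exists T. intros t Ht. rewrite ballR, Rminus_0_r. auto.
Qed.

Lemma dw_unique D f s l1 l2 :
  (forall del, 0 < del -> exists y, D y /\ y <> s /\ Rabs (y - s) < del) ->
  deriv_within D f s l1 -> deriv_within D f s l2 -> l1 = l2.
Proof.
  intros Hc H1 H2. rewrite dw_eps in H1, H2.
  destruct (Req_dec l1 l2) as [E|NE]; auto. exfalso.
  set (e := Rabs (l1 - l2) / 2).
  assert (He : 0 < e) by (unfold e; assert (0 < Rabs (l1 - l2)) by (apply Rabs_pos_lt; lra); lra).
  destruct (H1 e He) as [d1 [Hd1 K1]]. destruct (H2 e He) as [d2 [Hd2 K2]].
  destruct (Hc (Rmin d1 d2)) as [y [Dy [ny Hy]]]. apply Rmin_pos; auto.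
  assert (A1 := K1 y Dy ny (Rlt_le_trans _ _ _ Hy (Rmin_l _ _))).
  assert (A2 := K2 y Dy ny (Rlt_le_trans _ _ _ Hy (Rmin_r _ _))).
  set (z := (f y - f s) / (y - s)) in *.
  assert (Rabs (l1 - l2) <= Rabs (z - l1) + Rabs (z - l2)).
  { replace (l1 - l2) with (-(z - l1) + (z - l2)) by ring.
    eapply Rle_trans; [apply Rabs_triang|]. rewrite Rabs_Ropp. lra. }
  unfold e in *. lra.
Qed.

Lemma close_Iv h s del : 0 < h -> Iv h s -> 0 < del ->
  exists y, Iv h y /\ y <> s /\ Rabs (y - s) < del.
Proof.
  intros Hh [H1 H2] Hd. set (e := Rmin del h / 2).
  assert (0 < e) by (unfold e; assert (0 < Rmin del h) by (apply Rmin_pos; auto); lra).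
  assert (e < del) by (unfold e; assert (Rmin del h <= del) by apply Rmin_l; lra).
  assert (2 * e <= h) by (unfold e; assert (Rmin del h <= h) by apply Rmin_r; lra).
  destruct (Rle_dec (-h) (s - e)).
  - exists (s - e). unfold Iv. repeat split; try lra.
    replace (s - e - s) with (- e) by ring. rewrite Rabs_Ropp, Rabs_pos_eq; lra.
  - exists (s + e). unfold Iv. repeat split; try lra.
    replace (s + e - s) with e by ring. rewrite Rabs_pos_eq; lra.
Qed.

Lemma close_pos t del : 0 <= t -> 0 < del ->
  exists y, 0 <= y /\ y <> t /\ Rabs (y - t) < del.
Proof.
  intros Ht Hd. exists (t + del/2). repeat split; try lra.
  replace (t + del/2 - t) with (del/2) by ring. rewrite Rabs_pos_eq; lra.
Qed.

Lemma dseg_eq h f s l : 0 < h -> Iv h s -> deriv_within (Iv h) f s l -> dseg h f s = l.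
Proof.
  intros Hh Hs H. unfold dseg.
  assert (E : exists l, deriv_within (Iv h) f s l) by eauto.
  pose proof (epsilon_spec (inhabits 0) _ E) as H'.
  apply (dw_unique (Iv h) f s); auto. intros; apply close_Iv; auto.
Qed.

Lemma dw_cont D f s l : deriv_within D f s l ->
  forall eps, 0 < eps -> exists del, 0 < del /\ forall y, D y -> Rabs (y - s) < del ->
    Rabs (f y - f s) < eps.
Proof.
  rewrite dw_eps. intros H eps He. destruct (H 1 Rlt_0_1) as [d [Hd K]].
  set (d' := Rmin d (eps / (Rabs l + 1))).
  assert (0 < Rabs l + 1) by (generalize (Rabs_pos l); lra).
  exists d'. split. apply Rmin_pos; auto. apply Rdiv_lt_0_compat; auto.
  intros y Dy Hy. destruct (Req_dec y s) as [->|ny].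
  - rewrite Rminus_diag, Rabs_R0; auto.
  - assert (Hys : y - s <> 0) by lra.
    assert (K1 := K y Dy ny (Rlt_le_trans _ _ _ Hy (Rmin_l _ _))).
    assert (Hq : Rabs ((f y - f s) / (y - s)) <= Rabs l + 1).
    { replace ((f y - f s) / (y - s)) with (((f y - f s) / (y - s) - l) + l) by ring.
      eapply Rle_trans; [apply Rabs_triang|]. lra. }
    replace (f y - f s) with ((f y - f s) / (y - s) * (y - s)) by (field; auto).
    rewrite Rabs_mult.
    assert (Hy2 : Rabs (y - s) < eps / (Rabs l + 1)) by (eapply Rlt_le_trans; [exact Hy| apply Rmin_r]).
    assert (Rabs (y - s) * (Rabs l + 1) < eps).
    { apply (Rmult_lt_compat_r (Rabs l + 1)) in Hy2; auto.
      unfold Rdiv in Hy2. rewrite Rmult_assoc, Rinv_l in Hy2; lra. }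
    assert (0 <= Rabs (y - s)) by apply Rabs_pos.
    nra.
Qed.


Lemma Iv0 h : 0 < h -> Iv h 0.
Proof. unfold Iv; lra. Qed.

Lemma sup0_le h f c : 0 < h -> (forall s, Iv h s -> Rabs (f s) <= c) -> sup0 h f <= c.
Proof.
  intros Hh H. unfold sup0.
  set (E := fun y => exists s, Iv h s /\ y = Rabs (f s)).
  destruct (Lub_Rbar_correct E) as [ub lub].
  assert (A : Rbar_le (Lub_Rbar E) c).
  { apply lub. intros x [s [Hs ->]]. simpl. auto. }
  assert (B : Rbar_le (Rabs (f 0)) (Lub_Rbar E)).
  { apply ub. exists 0; split; auto. apply Iv0; auto. }
  destruct (Lub_Rbar E); simpl in *; auto; try contradiction.
Qed.

Lemma le_sup0 h f s : (exists B, forall s, Iv h s -> Rabs (f s) <= B) -> Iv h s ->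
  Rabs (f s) <= sup0 h f.
Proof.
  intros [Bd HB] Hs. unfold sup0.
  set (E := fun y => exists s, Iv h s /\ y = Rabs (f s)).
  destruct (Lub_Rbar_correct E) as [ub lub].
  assert (A : Rbar_le (Lub_Rbar E) Bd).
  { apply lub. intros x [s' [Hs' ->]]. simpl. auto. }
  assert (B : Rbar_le (Rabs (f s)) (Lub_Rbar E)).
  { apply ub. exists s; split; auto. }
  destruct (Lub_Rbar E); simpl in *; auto; contradiction.
Qed.

Lemma sup0_ge0 h f : 0 < h -> 0 <= sup0 h f.
Proof.
  intros Hh. unfold sup0.
  set (E := fun y => exists s, Iv h s /\ y = Rabs (f s)).
  destruct (Lub_Rbar_correct E) as [ub lub].
  assert (B : Rbar_le (Rabs (f 0)) (Lub_Rbar E)).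
  { apply ub. exists 0; split; auto. apply Iv0; auto. }
  destruct (Lub_Rbar E); simpl in *; try lra.
  generalize (Rabs_pos (f 0)); lra.
Qed.

Definition clamp h y := Rmax (-h) (Rmin 0 y).

Lemma clamp_Iv h y : 0 < h -> Iv h (clamp h y).
Proof.
  intros Hh. unfold clamp, Iv, Rmax, Rmin.
  destruct (Rle_dec 0 y); destruct (Rle_dec (-h) _); lra.
Qed.

Lemma clamp_id h y : Iv h y -> clamp h y = y.
Proof.
  unfold clamp, Iv, Rmax, Rmin. intros.
  destruct (Rle_dec 0 y); destruct (Rle_dec (-h) _); lra.
Qed.

Lemma clamp_dist h y c : 0 < h -> Iv h c -> Rabs (clamp h y - c) <= Rabs (y - c).
Proof.
  intros Hh Hc. unfold Iv in Hc. unfold clamp, Rmax, Rmin.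
  destruct (Rle_dec 0 y); destruct (Rle_dec (-h) _);
  unfold Rabs; repeat destruct Rcase_abs; lra.
Qed.

Lemma bounded_cont h g : 0 < h ->
  (forall s, Iv h s -> forall eps, 0 < eps -> exists del, 0 < del /\
     forall y, Iv h y -> Rabs (y - s) < del -> Rabs (g y - g s) < eps) ->
  exists B, forall s, Iv h s -> Rabs (g s) <= B.
Proof.
  intros Hh H.
  destruct (continuity_ab_maj (fun y => Rabs (g (clamp h y))) (-h) 0) as [Mx [HM _]].
  - lra.
  - intros c Hc. assert (Ic : Iv h c) by (unfold Iv; lra).
    intros eps He. destruct (H c Ic eps He) as [d [Hd K]].
    exists d; split; auto. intros x [_ Hx]. unfold R_dist in *. simpl in *.
    unfold R_dist in Hx. rewrite (clamp_id h c Ic).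
    eapply Rle_lt_trans; [apply Rabs_triang_inv2|].
    apply K. apply clamp_Iv; auto.
    eapply Rle_lt_trans; [apply clamp_dist; auto| exact Hx].
  - exists (Rabs (g (clamp h Mx))). intros s Hs.
    generalize (HM s ltac:(unfold Iv in Hs; lra)). rewrite (clamp_id h s Hs). auto.
Qed.

Lemma C1_dseg h f : 0 < h -> C1on h f ->
  (forall s, Iv h s -> deriv_within (Iv h) f s (dseg h f s)) /\
  (forall s, Iv h s -> forall eps, 0 < eps -> exists del, 0 < del /\
     forall y, Iv h y -> Rabs (y - s) < del -> Rabs (dseg h f y - dseg h f s) < eps).
Proof.
  intros Hh [f' [H1 H2]].
  assert (E : forall s, Iv h s -> dseg h f s = f' s) by (intros; apply dseg_eq; auto).
  split.
  - intros s Hs. rewrite E; auto.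
  - intros s Hs eps He. destruct (proj1 (cw_eps _ _ _ _) (H2 s Hs) eps He) as [d [Hd K]].
    exists d; split; auto. intros y Hy Hys. rewrite !E; auto.
Qed.

Lemma C1_bounded h f : 0 < h -> C1on h f ->
  (exists B, forall s, Iv h s -> Rabs (f s) <= B) /\
  (exists B, forall s, Iv h s -> Rabs (dseg h f s) <= B).
Proof.
  intros Hh HC. destruct (C1_dseg h f Hh HC) as [D1 D2]. split.
  - apply bounded_cont; auto. intros s Hs. apply (dw_cont (Iv h) f s (dseg h f s)); auto.
  - apply bounded_cont; auto.
Qed.

Lemma C1_le_sup h f s : 0 < h -> C1on h f -> Iv h s -> Rabs (f s) <= sup0 h f.
Proof. intros Hh HC Hs. apply le_sup0; auto. apply (C1_bounded h f Hh HC). Qed.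

Lemma C1_le_supd h f s : 0 < h -> C1on h f -> Iv h s -> Rabs (dseg h f s) <= sup0 h (dseg h f).
Proof. intros Hh HC Hs. apply le_sup0; auto. apply (C1_bounded h f Hh HC). Qed.

Lemma dseg_bound_ext h f s0 c : 0 < h -> C1on h f -> Iv h s0 ->
  (forall s, Iv h s -> s <> s0 -> Rabs (dseg h f s) <= c) ->
  sup0 h (dseg h f) <= c.
Proof.
  intros Hh HC Hs0 H. apply sup0_le; auto. intros s Hs.
  destruct (Req_dec s s0) as [->|ne]; [|auto].
  destruct (Rle_dec (Rabs (dseg h f s0)) c) as [|nl]; auto. exfalso.
  destruct (C1_dseg h f Hh HC) as [_ D2].
  destruct (D2 s0 Hs0 (Rabs (dseg h f s0) - c)) as [d [Hd K]]; [lra|].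
  destruct (close_Iv h s0 d Hh Hs0 Hd) as [y [Hy [ny Hyd]]].
  assert (K1 := K y Hy Hyd). assert (K2 := H y Hy ny).
  assert (Rabs (dseg h f s0) <= Rabs (dseg h f y) + Rabs (dseg h f y - dseg h f s0)).
  { replace (dseg h f s0) with (dseg h f y - (dseg h f y - dseg h f s0)) at 1 by ring.
    eapply Rle_trans; [apply Rabs_triang|]. rewrite Rabs_Ropp; lra. }
  lra.
Qed.

Lemma norm0_le1 h p : 0 < h -> norm0 h p <= norm1 h p.
Proof.
  intros Hh. unfold norm1. assert (0 <= sup0 h (dseg h (fst p))) by (apply sup0_ge0; auto).
  assert (Rmax (sup0 h (dseg h (fst p))) (sup0 h (dseg h (snd p))) >= sup0 h (dseg h (fst p))).
  { apply Rle_ge, Rmax_l. }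
  lra.
Qed.

Lemma norm0_ge0 h p : 0 < h -> 0 <= norm0 h p.
Proof. intros Hh. unfold norm0. eapply Rle_trans; [apply (sup0_ge0 h (fst p) Hh)| apply Rmax_l]. Qed.


Lemma dw_transfer (D D' : R -> Prop) f a b c l : deriv_within D f a l -> a = c + b ->
  (exists e, 0 < e /\ forall y, D' y -> Rabs (y - b) < e -> D (c + y)) ->
  deriv_within D' (fun y => f (c + y)) b l.
Proof.
  intros H -> [e [He HD]]. rewrite dw_eps in *. intros eps Heps.
  destruct (H eps Heps) as [d [Hd K]]. exists (Rmin d e). split. apply Rmin_pos; auto.
  intros y Dy ny Hy.
  assert (Hy1 : Rabs (y - b) < d) by (eapply Rlt_le_trans; [exact Hy| apply Rmin_l]).
  assert (Hy2 : Rabs (y - b) < e) by (eapply Rlt_le_trans; [exact Hy| apply Rmin_r]).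
  replace (y - b) with ((c + y) - (c + b)) by ring.
  apply K. apply HD; auto. intro E; apply ny; lra.
  replace ((c + y) - (c + b)) with (y - b) by ring. auto.
Qed.

Lemma dw_ext (D : R -> Prop) f g a l : (forall y, D y -> f y = g y) -> D a ->
  deriv_within D f a l -> deriv_within D g a l.
Proof.
  intros E Da H. rewrite dw_eps in *. intros eps He. destruct (H eps He) as [d [Hd K]].
  exists d; split; auto. intros y Dy ny Hy. rewrite <- !E; auto.
Qed.

Lemma dshift_gen h (f g e : R -> R) t c : 0 < h -> 0 <= t ->
  (forall s, Iv h s -> f s = g s) -> C1on h g -> C1on h (fun s => f (t + s)) ->
  (forall tau, 0 <= tau -> deriv_within (fun u => 0 <= u) f tau (e tau)) ->
  (forall s, Iv h s -> 0 < t + s -> Rabs (e (t + s)) <= c) ->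
  (forall s, Iv h s -> t + s < 0 -> Rabs (dseg h g (t + s)) <= c) ->
  sup0 h (dseg h (fun s => f (t + s))) <= c.
Proof.
  intros Hh Ht Efg Cg Cf Hd Hc1 Hc2.
  assert (Cl : forall s, Iv h s -> t + s <> 0 -> Rabs (dseg h (fun s => f (t + s)) s) <= c).
  { intros s Hs nz. destruct (Rlt_dec 0 (t + s)).
    - rewrite (dseg_eq h _ s (e (t + s))); auto.
      apply (dw_transfer (fun u => 0 <= u) (Iv h) f (t + s)); [apply Hd; lra| reflexivity|].
      exists (t + s); split; auto. intros y Hy Hys.
      unfold Rabs in Hys; destruct Rcase_abs in Hys; lra.
    - assert (Hts : t + s < 0) by lra. assert (Iv h (t + s)) by (unfold Iv in *; lra).
      rewrite (dseg_eq h _ s (dseg h g (t + s))); auto.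
      apply (dw_transfer (Iv h) (Iv h) f (t + s)); [|reflexivity|].
      apply (dw_ext (Iv h) g f); auto. intros; symmetry; auto.
      apply (C1_dseg h g Hh Cg); auto.
      exists (- (t + s)); split; [lra|]. intros y Hy Hys. unfold Iv in *.
      unfold Rabs in Hys; destruct Rcase_abs in Hys; lra. }
  destruct (Rle_dec t h).
  - apply (dseg_bound_ext h _ (- t)); auto. unfold Iv; lra.
    intros s Hs ns. apply Cl; auto. lra.
  - apply sup0_le; auto. intros s Hs. apply Cl; auto. unfold Iv in Hs; lra.
Qed.

Lemma sup_shift_le h (f g : R -> R) t c : 0 < h -> 0 <= t ->
  (forall s, Iv h s -> f s = g s) ->
  (forall s, Iv h s -> 0 <= t + s -> Rabs (f (t + s)) <= c) ->
  (forall s, Iv h s -> t + s < 0 -> Rabs (g (t + s)) <= c) ->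
  sup0 h (fun s => f (t + s)) <= c.
Proof.
  intros Hh Ht E H1 H2. apply sup0_le; auto. intros s Hs.
  destruct (Rle_dec 0 (t + s)); auto.
  rewrite E. apply H2; auto; lra. unfold Iv in *; lra.
Qed.


Lemma dw_pos_derive f t l : 0 < t -> deriv_within (fun u => 0 <= u) f t l -> is_derive f t l.
Proof.
  intros Ht H. rewrite is_derive_Reals. rewrite dw_eps in H. intros eps He.
  destruct (H eps He) as [d [Hd K]].
  exists (mkposreal (Rmin d t) (Rmin_pos _ _ Hd Ht)). simpl. intros k nk Hk.
  assert (Hk1 : Rabs k < d) by (eapply Rlt_le_trans; [exact Hk| apply Rmin_l]).
  assert (Hk2 : Rabs k < t) by (eapply Rlt_le_trans; [exact Hk| apply Rmin_r]).
  replace k with ((t + k) - t) at 2 by ring.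
  apply K. unfold Rabs in Hk2; destruct Rcase_abs in Hk2; lra.
  lra. replace (t + k - t) with k by ring. auto.
Qed.

Lemma compare (v d : R -> R) mu e T : 0 < mu -> 0 < T ->
  (forall x, T <= x -> is_derive v x (d x)) ->
  (forall x, T <= x -> d x <= e - mu * v x) ->
  forall x, T <= x -> (v x - e / mu) * exp (mu * x) <= (v T - e / mu) * exp (mu * T).
Proof.
  intros Hmu HT Hd Hle x Hx.
  set (g := fun y => (v y - e / mu) * exp (mu * y)).
  set (dg := fun y => d y * exp (mu * y) + (v y - e / mu) * (mu * exp (mu * y))).
  assert (Hg : forall y, T <= y -> is_derive g y (dg y)).
  { intros y Hy. unfold g, dg. assert (H := Hd y Hy). auto_derive.
    exists (d y); exact H.
    replace (Derive (fun x0 => v x0) y) with (d y) by (symmetry; apply is_derive_unique; auto).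
    ring. }
  destruct (Req_dec x T) as [->|nx]. lra.
  destruct (MVT_gen g T x dg) as [c [Hc E]].
  - intros y Hy. apply Hg. rewrite Rmin_left in Hy; lra.
  - intros y Hy. rewrite Rmin_left in Hy by lra. apply derivable_continuous_pt.
    exists (dg y). apply is_derive_Reals. apply Hg; lra.
  - rewrite Rmin_left in Hc by lra. rewrite Rmax_right in Hc by lra.
    assert (dg c <= 0).
    { unfold dg. assert (H1 := Hle c ltac:(lra)). assert (0 < exp (mu * c)) by apply exp_pos.
      replace (d c * exp (mu * c) + (v c - e / mu) * (mu * exp (mu * c))) with
        ((d c + mu * v c - e) * exp (mu * c)) by (field; lra).
      assert (d c + mu * v c - e <= 0) by lra. nra. }
    change (g x <= g T). assert (dg c * (x - T) <= 0) by nra. lra.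
Qed.


Definition SolH h q j mu (sol : seg -> seg) := forall phi, inXp h q j mu phi ->
     is_solution h q j mu (sol phi) phi /\
     forall t, 0 <= t -> inXp h q j mu (shift (sol phi) t).

Section S.
Lemma x_inUp h q j mu sol phi t : SolH h q j mu sol -> inXp h q j mu phi -> 0 <= t ->
  inUp h (shift (sol phi) t).
Proof. intros S Hp Ht. apply (proj2 (S phi Hp) t Ht). Qed.

Lemma x_nonneg h q j mu sol phi t : 0 < h -> SolH h q j mu sol -> inXp h q j mu phi -> 0 <= t ->
  0 <= fst (sol phi) t /\ 0 <= snd (sol phi) t.
Proof.
  intros Hh S Hp Ht. destruct (x_inUp h q j mu sol phi t S Hp Ht) as [_ [_ P]].
  destruct (P 0 (Iv0 h Hh)) as [P1 P2]. simpl in P1, P2. rewrite Rplus_0_r in P1, P2. auto.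
Qed.

Lemma x_le_sup h q j mu sol phi t : 0 < h -> SolH h q j mu sol -> inXp h q j mu phi -> 0 <= t ->
  Rabs (fst (sol phi) t) <= sup0 h (fst (shift (sol phi) t)) /\
  Rabs (snd (sol phi) t) <= sup0 h (snd (shift (sol phi) t)).
Proof.
  intros Hh S Hp Ht. destruct (x_inUp h q j mu sol phi t S Hp Ht) as [C1 [C2 _]].
  split.
  - generalize (C1_le_sup h _ 0 Hh C1 (Iv0 h Hh)). simpl. rewrite Rplus_0_r. auto.
  - generalize (C1_le_sup h _ 0 Hh C2 (Iv0 h Hh)). simpl. rewrite Rplus_0_r. auto.
Qed.

Lemma x_le_norm0 h q j mu sol phi t : 0 < h -> SolH h q j mu sol -> inXp h q j mu phi -> 0 <= t ->
  Rabs (fst (sol phi) t) <= norm0 h (shift (sol phi) t) /\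
  Rabs (snd (sol phi) t) <= norm0 h (shift (sol phi) t).
Proof.
  intros Hh S Hp Ht. destruct (x_le_sup h q j mu sol phi t Hh S Hp Ht). unfold norm0.
  split; eapply Rle_trans; eauto; [apply Rmax_l| apply Rmax_r].
Qed.

Lemma phi_le_norm h phi s : 0 < h -> inUp h phi -> Iv h s ->
  Rabs (fst phi s) <= norm0 h phi /\ Rabs (snd phi s) <= norm0 h phi /\
  Rabs (dseg h (fst phi) s) <= norm1 h phi - norm0 h phi /\
  Rabs (dseg h (snd phi) s) <= norm1 h phi - norm0 h phi.
Proof.
  intros Hh [C1 [C2 _]] Hs. unfold norm1, norm0.
  repeat split.
  - eapply Rle_trans; [apply C1_le_sup; eauto| apply Rmax_l].
  - eapply Rle_trans; [apply C1_le_sup; eauto| apply Rmax_r].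
  - ring_simplify. eapply Rle_trans; [apply C1_le_supd; eauto| apply Rmax_l].
  - ring_simplify. eapply Rle_trans; [apply C1_le_supd; eauto| apply Rmax_r].
Qed.

Lemma norm0_bound h q j mu sol phi t A : 0 < h -> SolH h q j mu sol -> inXp h q j mu phi -> 0 <= t ->
  (forall s, Iv h s -> 0 <= t + s ->
     Rabs (fst (sol phi) (t + s)) <= A /\ Rabs (snd (sol phi) (t + s)) <= A) ->
  (forall s, Iv h s -> t + s < 0 ->
     Rabs (fst phi (t + s)) <= A /\ Rabs (snd phi (t + s)) <= A) ->
  norm0 h (shift (sol phi) t) <= A.
Proof.
  intros Hh S Hp Ht H1 H2. assert (I := proj1 (proj1 (S phi Hp))).
  unfold norm0. apply Rmax_lub; simpl.
  - apply (sup_shift_le h (fst (sol phi)) (fst phi)); auto.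
    intros s Hs; apply (I s Hs). intros; apply H1; auto. intros; apply H2; auto.
  - apply (sup_shift_le h (snd (sol phi)) (snd phi)); auto.
    intros s Hs; apply (I s Hs). intros; apply H1; auto. intros; apply H2; auto.
Qed.
End S.


Lemma norm1_bound h Rm q j mu sol phi t A J M : 0 < h -> Rm < 0 -> 0 < mu ->
  (forall y, Rm < y -> Rabs (q y) <= M) ->
  SolH h q j mu sol -> inXp h q j mu phi -> 0 <= t -> 0 <= A -> 0 <= J ->
  (forall s, Iv h s -> 0 <= t + s ->
     Rabs (fst (sol phi) (t + s)) <= A /\ Rabs (snd (sol phi) (t + s)) <= A /\
     Rabs (j (shift (sol phi) (t + s))) <= J) ->
  (forall s, Iv h s -> t + s < 0 ->
     Rabs (fst phi (t + s)) <= A /\ Rabs (snd phi (t + s)) <= A /\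
     Rabs (dseg h (fst phi) (t + s)) <= A /\ Rabs (dseg h (snd phi) (t + s)) <= A) ->
  norm1 h (shift (sol phi) t) <= A + (M * A + J + mu * A + A).
Proof.
  intros Hh HRm Hmu HM S Hp Ht HA HJ H1 H2.
  assert (M0 : 0 <= M) by (eapply Rle_trans; [apply Rabs_pos| apply (HM 0); lra]).
  assert (I := proj1 (proj1 (S phi Hp))).
  assert (Dv := proj2 (proj1 (S phi Hp))).
  destruct (proj1 Hp) as [Cp1 [Cp2 _]].
  destruct (x_inUp h q j mu sol phi t S Hp Ht) as [Cx1 [Cx2 _]].
  unfold norm1. apply Rplus_le_compat.
  - apply (norm0_bound h q j mu sol phi t A); auto.
    intros s Hs Hts; destruct (H1 s Hs Hts) as [? [? ?]]; auto.
    intros s Hs Hts; destruct (H2 s Hs Hts) as [? [? ?]]; auto.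
  - assert (MA : 0 <= M * A) by (apply Rmult_le_pos; auto).
    assert (muA : 0 <= mu * A) by (apply Rmult_le_pos; lra).
    apply Rmax_lub.
    + change (sup0 h (dseg h (fun s => fst (sol phi) (t + s))) <= M * A + J + mu * A + A).
      apply (dshift_gen h (fst (sol phi)) (fst phi) (fun tau => q (snd (sol phi) tau) * fst (sol phi) tau)); auto.
      * intros s Hs; apply (I s Hs).
      * intros tau Htau; apply (Dv tau Htau).
      * intros s Hs Hts. destruct (H1 s Hs ltac:(lra)) as [A1 [A2 A3]].
        rewrite Rabs_mult.
        assert (Rabs (q (snd (sol phi) (t + s))) <= M).
        { apply HM. destruct (x_nonneg h q j mu sol phi (t + s) Hh S Hp ltac:(lra)). lra. }
        assert (Rabs (q (snd (sol phi) (t + s))) * Rabs (fst (sol phi) (t + s)) <= M * A).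
        { apply Rmult_le_compat; auto; apply Rabs_pos. }
        lra.
      * intros s Hs Hts. destruct (H2 s Hs Hts) as [? [? [? ?]]]. lra.
    + change (sup0 h (dseg h (fun s => snd (sol phi) (t + s))) <= M * A + J + mu * A + A).
      apply (dshift_gen h (snd (sol phi)) (snd phi) (fun tau => j (shift (sol phi) tau) - mu * snd (sol phi) tau)); auto.
      * intros s Hs; apply (I s Hs).
      * intros tau Htau; apply (Dv tau Htau).
      * intros s Hs Hts. destruct (H1 s Hs ltac:(lra)) as [A1 [A2 A3]].
        eapply Rle_trans; [apply Rabs_triang|]. rewrite Rabs_Ropp, Rabs_mult, (Rabs_pos_eq mu) by lra.
        assert (mu * Rabs (snd (sol phi) (t + s)) <= mu * A) by (apply Rmult_le_compat_l; lra).
        lra.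
      * intros s Hs Hts. destruct (H2 s Hs Hts) as [? [? [? ?]]]. lra.
Qed.


Definition to0 (f : R -> R) := forall eps, 0 < eps -> exists T, forall t, T < t -> Rabs (f t) < eps.

Lemma L_conv h Rm q j mu sol phi M : 0 < h -> Rm < 0 -> 0 < mu ->
  (forall y, Rm < y -> Rabs (q y) <= M) ->
  SolH h q j mu sol -> inXp h q j mu phi ->
  to0 (fst (sol phi)) -> to0 (snd (sol phi)) -> to0 (fun t => j (shift (sol phi) t)) ->
  conv0 (norm0 h) (sol phi) /\ conv0 (norm1 h) (sol phi).
Proof.
  intros Hh HRm Hmu HM S Hp Hw Hv Hj.
  assert (M0 : 0 <= M) by (eapply Rle_trans; [apply Rabs_pos| apply (HM 0); lra]).
  assert (key : forall eps, 0 < eps -> exists T, forall t, T < t -> norm1 h (shift (sol phi) t) < eps).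
  { intros eps He. set (K := M + mu + 2). assert (0 < K) by (unfold K; lra).
    set (A := eps / (2 * K)). assert (0 < A) by (unfold A; apply Rdiv_lt_0_compat; lra).
    destruct (Hw A H0) as [T1 K1]. destruct (Hv A H0) as [T2 K2].
    destruct (Hj (eps / 4) ltac:(lra)) as [T3 K3].
    set (T := Rmax (Rmax T1 T2) (Rmax T3 0) + h).
    assert (T1 <= Rmax (Rmax T1 T2) (Rmax T3 0)) by (eapply Rle_trans; [apply Rmax_l| apply Rmax_l]).
    assert (T2 <= Rmax (Rmax T1 T2) (Rmax T3 0)) by (eapply Rle_trans; [apply Rmax_r| apply Rmax_l]).
    assert (T3 <= Rmax (Rmax T1 T2) (Rmax T3 0)) by (eapply Rle_trans; [apply Rmax_l| apply Rmax_r]).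
    assert (0 <= Rmax (Rmax T1 T2) (Rmax T3 0)) by (eapply Rle_trans; [apply Rmax_r| apply Rmax_r]).
    exists T. intros t Ht. unfold T in Ht.
    eapply Rle_lt_trans.
    apply (norm1_bound h Rm q j mu sol phi t A (eps / 4) M); auto; try lra.
    - intros s [Hs1 Hs2] Hts. repeat split; apply Rlt_le; [apply K1|apply K2|apply K3]; lra.
    - intros s [Hs1 Hs2] Hts. lra.
    - replace (A + (M * A + eps / 4 + mu * A + A)) with (A * K + eps / 4) by (unfold K; ring).
      unfold A. replace (eps / (2 * K) * K) with (eps / 2) by (field; lra). lra. }
  split; apply lim_eps; intros eps He; destruct (key eps He) as [T HT]; exists T; intros t Ht;
    assert (H1 := HT t Ht); assert (H2 := norm0_le1 h (shift (sol phi) t) Hh);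
    assert (H3 := norm0_ge0 h (shift (sol phi) t) Hh);
    rewrite Rabs_pos_eq; lra.
Qed.

Lemma conv_a h Rm q j mu sol phi M : 0 < h -> Rm < 0 -> 0 < mu ->
  (forall y, Rm < y -> Rabs (q y) <= M) ->
  SolH h q j mu sol -> inXp h q j mu phi -> j zseg = 0 -> Ccont0_j h j ->
  conv0 (norm0 h) (sol phi) -> conv0 (norm1 h) (sol phi).
Proof.
  intros Hh HRm Hmu HM S Hp Hj0 Hc Hconv.
  unfold conv0 in Hconv. rewrite lim_eps in Hconv.
  apply (L_conv h Rm q j mu sol phi M); auto.
  - intros eps He. destruct (Hconv eps He) as [T HT]. exists (Rmax T 0). intros t Ht.
    assert (T <= Rmax T 0) by apply Rmax_l. assert (0 <= Rmax T 0) by apply Rmax_r.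
    destruct (x_le_norm0 h q j mu sol phi t Hh S Hp ltac:(lra)) as [A1 _].
    generalize (HT t ltac:(lra)). generalize (norm0_ge0 h (shift (sol phi) t) Hh).
    intros. rewrite Rabs_pos_eq in H2 by lra. lra.
  - intros eps He. destruct (Hconv eps He) as [T HT]. exists (Rmax T 0). intros t Ht.
    assert (T <= Rmax T 0) by apply Rmax_l. assert (0 <= Rmax T 0) by apply Rmax_r.
    destruct (x_le_norm0 h q j mu sol phi t Hh S Hp ltac:(lra)) as [_ A1].
    generalize (HT t ltac:(lra)). generalize (norm0_ge0 h (shift (sol phi) t) Hh).
    intros. rewrite Rabs_pos_eq in H2 by lra. lra.
  - intros eps He. destruct (Hc eps He) as [d [Hd K]]. destruct (Hconv d Hd) as [T HT].
    exists (Rmax T 0). intros t Ht.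
    assert (T <= Rmax T 0) by apply Rmax_l. assert (0 <= Rmax T 0) by apply Rmax_r.
    generalize (HT t ltac:(lra)). generalize (norm0_ge0 h (shift (sol phi) t) Hh).
    intros. rewrite Rabs_pos_eq in H2 by lra.
    rewrite <- (Rminus_0_r (j _)), <- Hj0. apply K; [|lra].
    apply (x_inUp h q j mu sol phi t S Hp). lra.
Qed.

Lemma stab_a h Rm q j mu sol M (E : seg -> Prop) : 0 < h -> Rm < 0 -> 0 < mu ->
  (forall y, Rm < y -> Rabs (q y) <= M) ->
  SolH h q j mu sol -> (forall p, E p -> inXp h q j mu p) -> j zseg = 0 -> Ccont0_j h j ->
  stable_on (norm0 h) sol E -> stable_on (norm1 h) sol E.
Proof.
  intros Hh HRm Hmu HM S HE Hj0 Hc Hst eps He.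
  assert (M0 : 0 <= M) by (eapply Rle_trans; [apply Rabs_pos| apply (HM 0); lra]).
  set (K := M + mu + 2). assert (0 < K) by (unfold K; lra).
  destruct (Hc (eps / 4) ltac:(lra)) as [dj [Hdj Kj]].
  set (eta := Rmin dj (eps / (4 * K))).
  assert (Heta : 0 < eta) by (apply Rmin_pos; auto; apply Rdiv_lt_0_compat; lra).
  destruct (Hst eta Heta) as [d0 [Hd0 K0]].
  exists (Rmin d0 eta). split. apply Rmin_pos; auto.
  intros phi Ep Hn t Ht. assert (Hp := HE phi Ep).
  assert (N01 := norm0_le1 h phi Hh). assert (N0 := norm0_ge0 h phi Hh).
  assert (Hd0' : norm1 h phi < d0) by (eapply Rlt_le_trans; [exact Hn| apply Rmin_l]).
  assert (Het : norm1 h phi < eta) by (eapply Rlt_le_trans; [exact Hn| apply Rmin_r]).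
  assert (Hx : forall t', 0 <= t' -> norm0 h (shift (sol phi) t') < eta) by (intros; apply K0; auto; lra).
  eapply Rle_lt_trans.
  apply (norm1_bound h Rm q j mu sol phi t eta (eps / 4) M); auto; try lra.
  - intros s Hs Hts. destruct (x_le_norm0 h q j mu sol phi (t + s) Hh S Hp Hts) as [A1 A2].
    assert (B := Hx (t + s) Hts). repeat split; try lra.
    rewrite <- (Rminus_0_r (j _)), <- Hj0. apply Rlt_le, Kj.
    apply (x_inUp h q j mu sol phi (t + s) S Hp Hts).
    eapply Rlt_le_trans; [exact B| apply Rmin_l].
  - intros s Hs Hts. assert (Iv h (t + s)) by (unfold Iv in *; lra).
    destruct (phi_le_norm h phi (t + s) Hh (proj1 Hp) H0) as [A1 [A2 [A3 A4]]].
    repeat split; lra.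
  - assert (eta * K <= eps / 4).
    { assert (eta <= eps / (4 * K)) by apply Rmin_r.
      apply (Rmult_le_compat_r K) in H0; [|lra].
      replace (eps / (4 * K) * K) with (eps / 4) in H0 by (field; lra). lra. }
    replace (eta + (M * eta + eps / 4 + mu * eta + eta)) with (eta * K + eps / 4) by (unfold K; ring).
    lra.
Qed.


Definition Jsmall h (j : seg -> R) := forall eps, 0 < eps -> exists del, 0 < del /\
       forall p, inUp h p -> sup0 h (fst p) <= del -> j p <= eps.

Lemma v_deriv h q j mu sol phi : SolH h q j mu sol -> inXp h q j mu phi ->
  forall x, 0 < x -> is_derive (snd (sol phi)) x (j (shift (sol phi) x) - mu * snd (sol phi) x).
Proof.
  intros S Hp x Hx. apply dw_pos_derive; auto.
  apply (proj2 (proj1 (S phi Hp)) x). lra.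
Qed.

Lemma core_b h q j mu sol (E : seg -> Prop) b : 0 < h -> 0 < mu -> 0 < b ->
  SolH h q j mu sol -> (forall p, E p -> inXp h q j mu p) ->
  (forall p t, E p -> 0 <= t -> sup0 h (fst (shift (sol p) t)) <= sup0 h (fst p)) ->
  (forall p, inUp h p -> 0 <= j p) -> Jsmall h j ->
  exists del, 0 < del /\ del <= b /\ forall phi, E phi -> norm0 h phi < del ->
    forall t, 0 <= t -> Rabs (fst (sol phi) t) <= b /\ Rabs (snd (sol phi) t) <= b /\
       Rabs (j (shift (sol phi) t)) <= mu * b.
Proof.
  intros Hh Hmu Hb S HE Hmon Jpos Js.
  destruct (Js (mu * b) ltac:(nra)) as [dj [Hdj Kj]].
  exists (Rmin dj b). split; [apply Rmin_pos; auto|]. split; [apply Rmin_r|].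
  intros phi Ep Hn.
  assert (Hp := HE phi Ep).
  assert (Hs1 : sup0 h (fst phi) <= norm0 h phi) by apply Rmax_l.
  assert (Hndj : norm0 h phi < dj) by (eapply Rlt_le_trans; [exact Hn| apply Rmin_l]).
  assert (Hnb : norm0 h phi < b) by (eapply Rlt_le_trans; [exact Hn| apply Rmin_r]).
  assert (Jb : forall t, 0 <= t -> 0 <= j (shift (sol phi) t) <= mu * b).
  { intros t Ht. assert (U := x_inUp h q j mu sol phi t S Hp Ht). split; auto.
    apply Kj; auto. generalize (Hmon phi t Ep Ht). lra. }
  assert (v0 : snd (sol phi) 0 = snd phi 0) by apply (proj1 (proj1 (S phi Hp)) 0 (Iv0 h Hh)).
  assert (v0b : Rabs (snd phi 0) <= norm0 h phi).
  { destruct (phi_le_norm h phi 0 Hh (proj1 Hp) (Iv0 h Hh)) as [_ [A _]]; auto. }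
  intros t Ht. destruct (x_nonneg h q j mu sol phi t Hh S Hp Ht) as [W0 V0].
  destruct (x_le_sup h q j mu sol phi t Hh S Hp Ht) as [W1 _].
  assert (JJ := Jb t Ht).
  split; [generalize (Hmon phi t Ep Ht); lra|].
  split; [|rewrite Rabs_pos_eq; lra].
  rewrite Rabs_pos_eq by lra.
  destruct (Req_dec t 0) as [->|nt].
  - rewrite v0. generalize (Rle_abs (snd phi 0)). lra.
  - assert (Dv0 := proj2 (proj2 (proj1 (S phi Hp)) 0 (Rle_refl 0))).
    destruct (dw_cont _ _ _ _ Dv0 (b - snd phi 0)) as [rho [Hrho Kr]].
    { generalize (Rle_abs (snd phi 0)). lra. }
    set (T := Rmin t (rho / 2)).
    assert (HT0 : 0 < T) by (apply Rmin_pos; lra).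
    assert (HTt : T <= t) by apply Rmin_l.
    assert (HTr : T <= rho / 2) by apply Rmin_r.
    assert (vT : snd (sol phi) T < b).
    { assert (K := Kr T ltac:(lra) ltac:(rewrite Rminus_0_r, Rabs_pos_eq; lra)).
      rewrite v0 in K. generalize (Rle_abs (snd (sol phi) T - snd phi 0)). lra. }
    assert (C := compare (snd (sol phi)) (fun x => j (shift (sol phi) x) - mu * snd (sol phi) x)
                   mu (mu * b) T Hmu HT0).
    assert (C' : (snd (sol phi) t - mu * b / mu) * exp (mu * t) <=
                 (snd (sol phi) T - mu * b / mu) * exp (mu * T)).
    { apply C; auto.
      - intros x Hx. apply (v_deriv h q j mu sol phi S Hp x). lra.
      - intros x Hx. generalize (Jb x ltac:(lra)). lra. }
    replace (mu * b / mu) with b in C' by (field; lra).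
    assert (0 < exp (mu * t)) by apply exp_pos. assert (0 < exp (mu * T)) by apply exp_pos.
    nra.
Qed.

Lemma stab_b h Rm q j mu sol M (E : seg -> Prop) : 0 < h -> Rm < 0 -> 0 < mu ->
  (forall y, Rm < y -> Rabs (q y) <= M) ->
  SolH h q j mu sol -> (forall p, E p -> inXp h q j mu p) ->
  (forall p t, E p -> 0 <= t -> sup0 h (fst (shift (sol p) t)) <= sup0 h (fst p)) ->
  (forall p, inUp h p -> 0 <= j p) -> Jsmall h j ->
  stable_on (norm0 h) sol E /\ stable_on (norm1 h) sol E.
Proof.
  intros Hh HRm Hmu HM S HE Hmon Jpos Js.
  assert (M0 : 0 <= M) by (eapply Rle_trans; [apply Rabs_pos| apply (HM 0); lra]).
  split.
  - intros eps He. destruct (core_b h q j mu sol E (eps / 2) Hh Hmu ltac:(lra) S HE Hmon Jpos Js)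
      as [d [Hd [Hdb K]]].
    exists d; split; auto. intros phi Ep Hn t Ht. assert (Hp := HE phi Ep).
    eapply Rle_lt_trans; [|instantiate (1 := eps / 2); lra].
    apply (norm0_bound h q j mu sol phi t); auto.
    + intros s Hs Hts. destruct (K phi Ep Hn (t + s) Hts) as [? [? ?]]; auto.
    + intros s Hs Hts. assert (Iv h (t + s)) by (unfold Iv in *; lra).
      destruct (phi_le_norm h phi (t + s) Hh (proj1 Hp) H) as [A1 [A2 _]]. lra.
  - intros eps He. set (K' := M + 2 * mu + 2). assert (0 < K') by (unfold K'; lra).
    set (b := eps / (2 * K')). assert (Hb : 0 < b) by (unfold b; apply Rdiv_lt_0_compat; lra).
    destruct (core_b h q j mu sol E b Hh Hmu Hb S HE Hmon Jpos Js) as [d [Hd [Hdb K]]].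
    exists d; split; auto. intros phi Ep Hn t Ht. assert (Hp := HE phi Ep).
    assert (N01 := norm0_le1 h phi Hh). assert (N0 := norm0_ge0 h phi Hh).
    eapply Rle_lt_trans.
    apply (norm1_bound h Rm q j mu sol phi t b (mu * b) M); auto; try lra.
    + apply Rmult_le_pos; lra.
    + intros s Hs Hts. apply (K phi Ep ltac:(lra) (t + s) Hts).
    + intros s Hs Hts. assert (Iv h (t + s)) by (unfold Iv in *; lra).
      destruct (phi_le_norm h phi (t + s) Hh (proj1 Hp) H0) as [A1 [A2 [A3 A4]]].
      repeat split; lra.
    + replace (b + (M * b + mu * b + mu * b + b)) with (b * K') by (unfold K'; ring).
      unfold b. replace (eps / (2 * K') * K') with (eps / 2) by (field; lra). lra.
Qed.

Lemma conv_c h Rm q j mu sol phi M : 0 < h -> Rm < 0 -> 0 < mu ->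
  (forall y, Rm < y -> Rabs (q y) <= M) ->
  SolH h q j mu sol -> inXp h q j mu phi ->
  (forall p, inUp h p -> 0 <= j p) -> Jsmall h j ->
  is_lim (fst (sol phi)) p_infty 0 ->
  conv0 (norm0 h) (sol phi) /\ conv0 (norm1 h) (sol phi).
Proof.
  intros Hh HRm Hmu HM S Hp Jpos Js Hw. rewrite lim_eps in Hw.
  assert (Hj : to0 (fun t => j (shift (sol phi) t))).
  { intros eps He. destruct (Js (eps / 2) ltac:(lra)) as [dj [Hdj Kj]].
    destruct (Hw dj Hdj) as [T0 K0]. exists (Rmax T0 0 + h). intros t Ht.
    assert (T0 <= Rmax T0 0) by apply Rmax_l. assert (0 <= Rmax T0 0) by apply Rmax_r.
    assert (U := x_inUp h q j mu sol phi t S Hp ltac:(lra)).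
    assert (0 <= j (shift (sol phi) t)) by auto.
    assert (j (shift (sol phi) t) <= eps / 2).
    { apply Kj; auto. apply sup0_le; auto. intros s [Hs1 Hs2]. simpl.
      apply Rlt_le, K0. lra. }
    rewrite Rabs_pos_eq; lra. }
  apply (L_conv h Rm q j mu sol phi M); auto.
  intros eta Heta.
  destruct (Hj (mu * eta / 2) ltac:(nra)) as [T1 K1].
  set (T := Rmax T1 0 + 1).
  assert (T1 <= Rmax T1 0) by apply Rmax_l. assert (0 <= Rmax T1 0) by apply Rmax_r.
  assert (HT0 : 0 < T) by (unfold T; lra).
  assert (C := compare (snd (sol phi)) (fun x => j (shift (sol phi) x) - mu * snd (sol phi) x)
                   mu (mu * eta / 2) T Hmu HT0).
  set (Y := (snd (sol phi) T - mu * eta / 2 / mu) * exp (mu * T)) in C.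
  exists (Rmax T (Rabs Y * 2 / (eta * mu))). intros t Ht.
  assert (HtT : T <= t) by (generalize (Rmax_l T (Rabs Y * 2 / (eta * mu))); lra).
  assert (Ht2 : Rabs Y * 2 / (eta * mu) < t) by (generalize (Rmax_r T (Rabs Y * 2 / (eta * mu))); lra).
  assert (C' : (snd (sol phi) t - mu * eta / 2 / mu) * exp (mu * t) <= Y).
  { apply C; auto.
    - intros x Hx. apply (v_deriv h q j mu sol phi S Hp x). lra.
    - intros x Hx. generalize (K1 x ltac:(unfold T in Hx; lra)). intros Q.
      generalize (Rle_abs (j (shift (sol phi) x))). lra. }
  replace (mu * eta / 2 / mu) with (eta / 2) in C' by (field; lra).
  assert (Ex : 1 + mu * t < exp (mu * t)) by (apply exp_ineq1; nra).
  assert (Hmt : Rabs Y * 2 / eta < mu * t).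
  { apply (Rmult_lt_compat_r mu) in Ht2; auto.
    replace (Rabs Y * 2 / (eta * mu) * mu) with (Rabs Y * 2 / eta) in Ht2 by (field; lra). lra. }
  assert (Hy : Rabs Y < eta / 2 * exp (mu * t)).
  { apply (Rmult_lt_compat_r (eta / 2)) in Hmt; [|lra].
    replace (Rabs Y * 2 / eta * (eta / 2)) with (Rabs Y) in Hmt by (field; lra).
    assert (0 <= Rabs Y) by apply Rabs_pos. nra. }
  generalize (Rle_abs Y). intros.
  destruct (x_nonneg h q j mu sol phi t Hh S Hp ltac:(lra)) as [_ V0].
  assert (0 < exp (mu * t)) by apply exp_pos.
  rewrite Rabs_pos_eq by lra. nra.
Qed.


Lemma dw_const0 D s : deriv_within D (fun _ => 0) s 0.
Proof.
  rewrite dw_eps. intros eps He. exists 1; split; [lra|]. intros.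
  replace ((0 - 0) / (y - s) - 0) with 0 by (field; lra). rewrite Rabs_R0; auto.
Qed.

Lemma inUp_z h : inUp h zseg.
Proof.
  assert (C : C1on h (fun _ => 0)).
  { exists (fun _ => 0). split. intros; apply dw_const0.
    intros s _. apply filterlim_const. }
  split; [exact C|]. split; [exact C|]. intros; simpl; lra.
Qed.

Lemma Ff_z q j mu : Ff q j mu zseg = (0, 0) <-> j zseg = 0.
Proof.
  unfold Ff; simpl. split.
  - intros E. injection E. intros. lra.
  - intros E. rewrite E. f_equal; ring.
Qed.

Lemma inXp_z h q j mu : 0 < h -> (inXp h q j mu zseg <-> j zseg = 0).
Proof.
  intros Hh. unfold inXp. simpl. split.
  - intros [_ [_ D]]. assert (E := dw_unique (Iv h) (fun _ => 0) 0 _ _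
       (fun d Hd => close_Iv h 0 d Hh (Iv0 h Hh) Hd) (dw_const0 (Iv h) 0) D). lra.
  - intros E. split; [apply inUp_z|]. split.
    + replace (q 0 * 0) with 0 by ring. apply dw_const0.
    + rewrite E. replace (0 - mu * 0) with 0 by ring. apply dw_const0.
Qed.

Lemma sol_z h q j mu : 0 < h ->
  (forall p r : seg, (forall s, Iv h s -> fst p s = fst r s /\ snd p s = snd r s) -> j p = j r) ->
  (is_solution h q j mu zseg zseg <-> j zseg = 0).
Proof.
  intros Hh Hloc.
  assert (Es : forall t, j (shift zseg t) = j zseg) by (intros; apply Hloc; intros; simpl; auto).
  unfold is_solution. split.
  - intros [_ D]. destruct (D 0 (Rle_refl 0)) as [_ D2]. simpl in D2. rewrite Es in D2.
    assert (E := dw_unique (fun u => 0 <= u) (fun _ => 0) 0 _ _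
       (fun d Hd => close_pos 0 d (Rle_refl 0) Hd) (dw_const0 _ 0) D2). lra.
  - intros E. split. intros; simpl; auto.
    intros t Ht. simpl. rewrite Es, E. split.
    + replace (q 0 * 0) with 0 by ring. apply dw_const0.
    + replace (0 - mu * 0) with 0 by ring. apply dw_const0.
Qed.

Lemma Ccont_F h Rm q j mu M : 0 < h -> Rm < 0 -> 0 < mu ->
  (forall y, Rm < y -> Rabs (q y) <= M) ->
  Ccont0_j h j -> Ccont0_F h (Ff q j mu).
Proof.
  intros Hh HRm Hmu HM Hc eps He.
  assert (M0 : 0 <= M) by (eapply Rle_trans; [apply Rabs_pos| apply (HM 0); lra]).
  destruct (Hc (eps / 2) ltac:(lra)) as [d [Hd K]].
  set (d' := Rmin d (eps / (2 * (M + mu + 1)))).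
  assert (Hd'1 : d' <= d) by apply Rmin_l.
  assert (Hd'2 : d' <= eps / (2 * (M + mu + 1))) by apply Rmin_r.
  assert (Hd' : 0 < d') by (apply Rmin_pos; auto; apply Rdiv_lt_0_compat; lra).
  assert (Hd'3 : d' * (M + mu + 1) <= eps / 2).
  { apply (Rmult_le_compat_r (M + mu + 1)) in Hd'2; [|lra].
    replace (eps / (2 * (M + mu + 1)) * (M + mu + 1)) with (eps / 2) in Hd'2 by (field; lra). lra. }
  exists d'. split; auto. intros p Hp Hn.
  destruct (phi_le_norm h p 0 Hh Hp (Iv0 h Hh)) as [A1 [A2 _]].
  assert (Kj := K p Hp ltac:(lra)).
  destruct Hp as [_ [_ Pn]]. destruct (Pn 0 (Iv0 h Hh)) as [P1 P2].
  assert (N0 := norm0_ge0 h p Hh).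
  unfold norm2, Ff; simpl. apply Rmax_lub_lt.
  - replace (q (snd p 0) * fst p 0 - q 0 * 0) with (q (snd p 0) * fst p 0) by ring.
    rewrite Rabs_mult.
    assert (Rabs (q (snd p 0)) <= M) by (apply HM; lra).
    assert (Rabs (q (snd p 0)) * Rabs (fst p 0) <= M * d') by
      (apply Rmult_le_compat; try apply Rabs_pos; lra).
    nra.
  - replace (j p - mu * snd p 0 - (j zseg - mu * 0)) with ((j p - j zseg) - mu * snd p 0) by ring.
    eapply Rle_lt_trans; [apply Rabs_triang|]. rewrite Rabs_Ropp, Rabs_mult, (Rabs_pos_eq mu) by lra.
    assert (mu * Rabs (snd p 0) <= mu * d') by (apply Rmult_le_compat_l; lra).
    nra.
Qed.

Theorem lemma9 (h Rm mu : R) (q : R -> R) (j : seg -> R) (sol : seg -> seg) :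
  0 < h -> Rm < 0 -> 0 < mu ->
  (* j is a function of the segments on [-h,0] only *)
  (forall p r : seg, (forall s, Iv h s -> fst p s = fst r s /\ snd p s = snd r s) ->
     j p = j r) ->
  (* q is bounded and C^1 on I = (Rm, oo) *)
  (exists M, forall y, Rm < y -> Rabs (q y) <= M) ->
  (forall y, Rm < y -> ex_derive q y /\ continuous (Derive q) y) ->
  (* j >= 0 on U_+ *)
  (forall p, inUp h p -> 0 <= j p) ->
  (* j is ||.||_0-Lipschitz on bounded subsets of U_+ *)
  (forall B, exists L, forall p r, inUp h p -> inUp h r -> norm1 h p <= B -> norm1 h r <= B ->
     Rabs (j p - j r) <= L * norm0 h (segsub p r)) ->
  (* j(B1 x B2) is bounded whenever B1 x B2 in U_+ with B1 bounded *)
  (forall B, exists K, forall p, inUp h p -> norm1 h (fst p, fun _ => 0) <= B ->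
     Rabs (j p) <= K) ->
  (* global solutions from X_+, staying in X_+ (the semiflow) *)
  (forall phi, inXp h q j mu phi ->
     is_solution h q j mu (sol phi) phi /\
     forall t, 0 <= t -> inXp h q j mu (shift (sol phi) t)) ->
  (* (a) *)
  (((j zseg = 0 <-> Ff q j mu zseg = (0, 0)) /\
    (Ff q j mu zseg = (0, 0) <-> inXp h q j mu zseg) /\
    (inXp h q j mu zseg <-> is_solution h q j mu zseg zseg)) /\
   (j zseg = 0 -> exists p, inXp h q j mu p) /\
   (Ccont0_j h j -> Ccont0_F h (Ff q j mu)) /\
   (j zseg = 0 -> Ccont0_j h j ->
      (forall phi, inXp h q j mu phi -> conv0 (norm0 h) (sol phi) -> conv0 (norm1 h) (sol phi)) /\
      (glob_attr (norm0 h) sol (inXp h q j mu) -> glob_attr (norm1 h) sol (inXp h q j mu)) /\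
      (forall E : seg -> Prop, (forall p, E p -> inXp h q j mu p) ->
         stable_on (norm0 h) sol E -> stable_on (norm1 h) sol E) /\
      (GAS (norm0 h) sol (inXp h q j mu) -> GAS (norm1 h) sol (inXp h q j mu)))) /\
  ((j zseg = 0 /\
    (forall eps, 0 < eps -> exists del, 0 < del /\
       forall p, inUp h p -> sup0 h (fst p) <= del -> j p <= eps)) ->
   (* (b) *)
   (forall E : seg -> Prop, (forall p, E p -> inXp h q j mu p) -> E zseg ->
      (forall p t, E p -> 0 <= t -> sup0 h (fst (shift (sol p) t)) <= sup0 h (fst p)) ->
      stable_on (norm0 h) sol E /\ stable_on (norm1 h) sol E) /\
   (* (c) *)
   (forall phi, inXp h q j mu phi -> is_lim (fst (sol phi)) p_infty 0 ->
      conv0 (norm0 h) (sol phi) /\ conv0 (norm1 h) (sol phi)) /\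
   ((forall phi, inXp h q j mu phi -> is_lim (fst (sol phi)) p_infty 0) ->
      glob_attr (norm0 h) sol (inXp h q j mu) /\ glob_attr (norm1 h) sol (inXp h q j mu))).

Proof.
  intros Hh HRm Hmu Hloc [M HM] Hqd Jpos Hlip Hbd S.
  split.
  - split.
    + split. rewrite Ff_z; tauto. split. rewrite Ff_z, inXp_z; tauto. rewrite inXp_z, sol_z; tauto.
    + split. intros E; exists zseg; apply inXp_z; auto.
      split. apply (Ccont_F h Rm q j mu M); auto.
      intros Hj0 Hc.
      assert (CA : forall phi, inXp h q j mu phi -> conv0 (norm0 h) (sol phi) -> conv0 (norm1 h) (sol phi))
        by (intros; eapply conv_a; eauto).
      split; [exact CA|]. split. intros G phi Hphi; apply CA; auto.
      split. intros E HE Hs; eapply stab_a; eauto.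
      intros [Hs Hg]; split; [eapply stab_a; eauto | intros phi Hphi; apply CA; auto].
  - intros [Hj0 Js]. split. intros E HE Ez Hmon; eapply stab_b; eauto.
    split. intros phi Hphi Hw; eapply conv_c; eauto.
    intros Hall; split; intros phi Hphi; apply (conv_c h Rm q j mu sol phi M); auto.
Qed.
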